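(* Let $k\ge1$ be an integer and $a,b,c\in\mathbb{C}$ such that $2c,\ 2c+2,\ \frac{a+b+1}{2},\ \frac{a+b+3}{2},\ \frac{a+b+5}{2}\notin\{0,-1,-2,\dots\}$, $2c+1\neq0$, and $\mathrm{Re}(2c-a-b-2k+1)>0$. Define $$G_k(a,b,c)={}_3F_2\!\left(\left.\begin{array}{c}a+k,\ b,\ c\\ \frac{a+b+1}{2},\ 2c\end{array}\right|1\right).$$ Then $$G_k(a,b,c)=G_{k-1}(a,b,c)+\frac{b}{a+b+1}\left[\frac{(a+k)(b+1)}{(2c+1)(a+b+3)}\,G_{k-1}(a+2,b+2,c+1)+G_{k-1}(a+1,b+1,c)\right].$$
   Context: ${}_3F_2(a_1,a_2,a_3;b_1,b_2;1)=\sum_{m\ge0}\frac{(a_1)_m(a_2)_m(a_3)_m}{m!\,(b_1)_m(b_2)_m}$ with $(\alpha)_m=\Gamma(\alpha+m)/\Gamma(\alpha)$, absolutely convergent when $\mathrm{Re}(b_1+b_2-a_1-a_2-a_3)>0$. Note $G_{k-1}(a+2,b+2,c+1)={}_3F_2(a+k+1,b+2,c+1;\frac{a+b+5}{2},2c+2;1)$ and $G_{k-1}(a+1,b+1,c)={}_3F_2(a+k,b+1,c;\frac{a+b+3}{2},2c;1)$. *)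

(* Defs.v *)
From Stdlib Require Import Reals Arith Factorial ClassicalEpsilon.
Open Scope R_scope.

Definition Cplx : Type := (R * R)%type.
Definition Cre (z : Cplx) : R := fst z.
Definition Cim (z : Cplx) : R := snd z.
Definition RtoC (x : R) : Cplx := (x, 0).
Definition Cadd (z w : Cplx) : Cplx := (fst z + fst w, snd z + snd w).
Definition Cneg (z : Cplx) : Cplx := (- fst z, - snd z).
Definition Csub (z w : Cplx) : Cplx := Cadd z (Cneg w).
Definition Cmul (z w : Cplx) : Cplx :=
  (fst z * fst w - snd z * snd w, fst z * snd w + snd z * fst w).
Definition Cinv (z : Cplx) : Cplx :=
  let d := fst z * fst z + snd z * snd z in (fst z / d, - snd z / d).
Definition Cdiv (z w : Cplx) : Cplx := Cmul z (Cinv w).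

Fixpoint poch (x : Cplx) (m : nat) : Cplx :=
  match m with
  | O => RtoC 1
  | S m' => Cmul (poch x m') (Cadd x (RtoC (INR m')))
  end.

Definition F32_term (a1 a2 a3 b1 b2 : Cplx) (m : nat) : Cplx :=
  Cdiv (Cmul (Cmul (poch a1 m) (poch a2 m)) (poch a3 m))
       (Cmul (Cmul (RtoC (INR (Factorial.fact m))) (poch b1 m)) (poch b2 m)).

Fixpoint Cpartial (u : nat -> Cplx) (n : nat) : Cplx :=
  match n with
  | O => u O
  | S n' => Cadd (Cpartial u n') (u n)
  end.

Definition Cseries_cv (u : nat -> Cplx) (l : Cplx) : Prop :=
  Un_cv (fun n => fst (Cpartial u n)) (fst l) /\
  Un_cv (fun n => snd (Cpartial u n)) (snd l).

(* value of 3F2 at 1: the sum of the series (chosen by epsilon; it is the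
   genuine sum whenever the series converges). *)
Definition F32 (a1 a2 a3 b1 b2 : Cplx) : Cplx :=
  epsilon (inhabits (RtoC 0)) (fun l => Cseries_cv (F32_term a1 a2 a3 b1 b2) l).

Definition notNonPosInt (z : Cplx) : Prop := forall n : nat, z <> RtoC (- INR n).

Definition G (k : nat) (a b c : Cplx) : Cplx :=
  F32 (Cadd a (RtoC (INR k))) b c
      (Cdiv (Cadd (Cadd a b) (RtoC 1)) (RtoC 2))
      (Cmul (RtoC 2) c).

(* Main.v *)
From Stdlib Require Import Reals Lra Lia Factorial ClassicalEpsilon ZArith.
From Coquelicot Require Import Coquelicot.
Require Import Defs.
Open Scope R_scope.

Lemma Cadd_eq z w : Cadd z w = (z + w)%C. Proof. reflexivity. Qed.
Lemma Cmul_eq z w : Cmul z w = (z * w)%C. Proof. reflexivity. Qed.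
Lemma Csub_eq z w : Csub z w = (z - w)%C. Proof. reflexivity. Qed.
Lemma RtoC_eq x : Defs.RtoC x = Complex.RtoC x. Proof. reflexivity. Qed.
Lemma Cinv_eq z : Defs.Cinv z = (/ z)%C.
Proof. unfold Defs.Cinv, Complex.Cinv. simpl. f_equal; f_equal; ring. Qed.
Lemma Cdiv_eq z w : Defs.Cdiv z w = (z / w)%C.
Proof. unfold Defs.Cdiv. rewrite Cinv_eq. reflexivity. Qed.

Lemma Ceq_mul1 (x y : C) : (x * Complex.RtoC 1 = y * Complex.RtoC 1)%C -> x = y.
Proof. intro H. rewrite !Cmult_1_r in H. exact H. Qed.
Lemma Cadd_fun : Cadd = Cplus. Proof. reflexivity. Qed.
Lemma Cmul_fun : Cmul = Cmult. Proof. reflexivity. Qed.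
Lemma Csub_fun : Csub = Cminus. Proof. reflexivity. Qed.
Lemma RtoC_fun : Defs.RtoC = Complex.RtoC. Proof. reflexivity. Qed.
Ltac ceq := match goal with |- @eq _ ?a ?b => change (@eq C a b); apply Ceq_mul1 end.
Ltac toC := rewrite ?Cadd_fun, ?Cmul_fun, ?Csub_fun, ?RtoC_fun; repeat (rewrite ?Cdiv_eq, ?Cinv_eq).

Lemma test (x y : C) : y <> (Complex.RtoC 0) -> (x * y / y = x)%C.
Proof. intros. field. auto. Qed.

Lemma RtoC_plusE x y : Complex.RtoC (x + y) = (Complex.RtoC x + Complex.RtoC y)%C.
Proof. apply injective_projections; simpl; ring. Qed.
Lemma RtoC_multE x y : Complex.RtoC (x * y) = (Complex.RtoC x * Complex.RtoC y)%C.
Proof. apply injective_projections; simpl; ring. Qed.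

Lemma poch_S (x : C) m : poch x (S m) = (poch x m * (x + INR m))%C.
Proof. reflexivity. Qed.
Lemma poch_0 (x : C) : poch x 0 = Complex.RtoC 1.
Proof. reflexivity. Qed.

Lemma poch_Sl (x : C) m : poch x (S m) = (x * poch (x + Complex.RtoC 1) m)%C.
Proof.
  induction m.
  - simpl. toC. apply injective_projections; simpl; ring.
  - rewrite poch_S, IHm, poch_S. toC. rewrite S_INR, RtoC_plusE. ceq. ring.
Qed.

Lemma RtoC_inj x y : Complex.RtoC x = Complex.RtoC y -> x = y.
Proof. intro H. apply (f_equal fst) in H. exact H. Qed.

Lemma nnpi_S (z : C) : notNonPosInt z -> notNonPosInt (z + Complex.RtoC 1)%C.
Proof.
  intros H n E. apply (H (S n)). rewrite S_INR.
  pose proof (f_equal fst E) as E1. pose proof (f_equal snd E) as E2. simpl in E1, E2.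
  apply injective_projections; simpl; lra.
Qed.

Lemma nnpi_nz (z : C) : notNonPosInt z -> z <> (Complex.RtoC 0).
Proof.
  intros H E. apply (H 0%nat). rewrite E. simpl. apply injective_projections; simpl; ring.
Qed.

Lemma nnpi_add (z : C) m : notNonPosInt z -> (z + Complex.RtoC (INR m))%C <> (Complex.RtoC 0).
Proof.
  intros H E. apply (H m).
  pose proof (f_equal fst E) as E1. pose proof (f_equal snd E) as E2. simpl in E1, E2.
  apply injective_projections; simpl; lra.
Qed.

Lemma Cmul_nz (x y : C) : x <> (Complex.RtoC 0) -> y <> (Complex.RtoC 0) -> (x * y)%C <> (Complex.RtoC 0).
Proof. intros Hx Hy E. apply Cmod_gt_0 in Hx. apply Cmod_gt_0 in Hy.
  assert (Cmod (x*y) = 0) by (rewrite E; apply Cmod_0). rewrite Cmod_mult in H. nra. Qed.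

Lemma poch_nz (z : C) m : notNonPosInt z -> poch z m <> (Complex.RtoC 0).
Proof.
  intro H. induction m.
  - simpl. intro E. apply (f_equal fst) in E. simpl in E. lra.
  - rewrite poch_S. apply Cmul_nz; auto. rewrite <- RtoC_eq. apply nnpi_add; auto.
Qed.

Lemma fact_nz m : Complex.RtoC (INR (Factorial.fact m)) <> (Complex.RtoC 0).
Proof. intro E. apply (f_equal fst) in E. simpl in E. apply (INR_fact_neq_0 m). exact E. Qed.

Lemma Sm_nz m : (Complex.RtoC (INR m) + Complex.RtoC 1)%C <> (Complex.RtoC 0).
Proof. intro E. apply (f_equal fst) in E. simpl in E. pose proof (pos_INR m). lra. Qed.

Lemma fact_S m : Complex.RtoC (INR (Factorial.fact (S m))) = ((Complex.RtoC (INR m) + Complex.RtoC 1) * Complex.RtoC (INR (Factorial.fact m)))%C.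
Proof. rewrite fact_simpl, mult_INR, RtoC_multE, S_INR, RtoC_plusE. reflexivity. Qed.

Lemma term_eq (a1 a2 a3 b1 b2 : C) m : F32_term a1 a2 a3 b1 b2 m =
  (poch a1 m * poch a2 m * poch a3 m / (Complex.RtoC (INR (Factorial.fact m)) * poch b1 m * poch b2 m))%C.
Proof. unfold F32_term. toC. reflexivity. Qed.

Lemma R1 (x B C' D E : C) m :
  D <> (Complex.RtoC 0) -> E <> (Complex.RtoC 0) -> poch (D + Complex.RtoC 1)%C m <> (Complex.RtoC 0) -> poch (E + Complex.RtoC 1)%C m <> (Complex.RtoC 0) ->
  (F32_term (x + Complex.RtoC 1) B C' D E (S m) - F32_term x B C' D E (S m))%C =
  (B * C' / (D * E) * F32_term (x + Complex.RtoC 1) (B + Complex.RtoC 1) (C' + Complex.RtoC 1) (D + Complex.RtoC 1) (E + Complex.RtoC 1) m)%C.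
Proof.
  intros HD HE HD1 HE1.
  rewrite !term_eq. rewrite (poch_S (x + _)). rewrite !(poch_Sl x), !(poch_Sl B), !(poch_Sl C'), !(poch_Sl D), !(poch_Sl E).
  rewrite fact_S. toC. ceq. field. 
  repeat split; auto using fact_nz, Sm_nz.
Qed.

Lemma R2 (A B C' D : C) m :
  D <> (Complex.RtoC 0) -> poch (D + Complex.RtoC 1)%C m <> (Complex.RtoC 0) ->
  notNonPosInt (Complex.RtoC 2 * C')%C ->
  (F32_term A B (C' + Complex.RtoC 1) D (Complex.RtoC 2 * C' + Complex.RtoC 1) (S m)
   - F32_term A B C' D (Complex.RtoC 2 * C') (S m))%C =
  (A * B / (Complex.RtoC 2 * D * (Complex.RtoC 2 * C' + Complex.RtoC 1)) *
   F32_term (A + Complex.RtoC 1) (B + Complex.RtoC 1) (C' + Complex.RtoC 1) (D + Complex.RtoC 1)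
     (Complex.RtoC 2 * (C' + Complex.RtoC 1)) m)%C.
Proof.
  intros HD HD1 H2.
  set (E := (Complex.RtoC 2 * C')%C) in *.
  assert (HE : E <> Complex.RtoC 0) by (apply nnpi_nz; auto).
  assert (H2' := nnpi_S _ H2).
  assert (HE1 : (E + Complex.RtoC 1)%C <> Complex.RtoC 0) by (apply nnpi_nz; auto).
  assert (HE1m : (E + Complex.RtoC 1 + Complex.RtoC (INR m))%C <> Complex.RtoC 0) by (apply nnpi_add; auto).
  assert (HP : poch (E + Complex.RtoC 1)%C m <> Complex.RtoC 0) by (apply poch_nz; auto).
  assert (Hw : poch (Complex.RtoC 2 * (C' + Complex.RtoC 1))%C m =
     (poch (E + Complex.RtoC 1)%C m * (E + Complex.RtoC 1 + Complex.RtoC (INR m)) / (E + Complex.RtoC 1))%C).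
  { assert (Hq := poch_Sl (E + Complex.RtoC 1) m). rewrite poch_S in Hq.
    replace (Complex.RtoC 2 * (C' + Complex.RtoC 1))%C with (E + Complex.RtoC 1 + Complex.RtoC 1)%C
      by (unfold E; ceq; ring).
    toC. repeat rewrite ?Cadd_eq, ?Cmul_eq, ?RtoC_eq in Hq. ceq. rewrite Hq. ceq. field. auto. }
  rewrite !term_eq. rewrite Hw. rewrite (poch_S (C' + _)). rewrite !(poch_Sl A), !(poch_Sl B), !(poch_Sl C'), !(poch_Sl D), !(poch_Sl E).
  rewrite (poch_S (E + _)). rewrite fact_S. toC. subst E. ceq. field.
  repeat split; auto using fact_nz, Sm_nz.
  intro HC; apply HE; rewrite HC; ceq; ring.
Qed.

Lemma F32_val (a1 a2 a3 b1 b2 l : Cplx) :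
  Cseries_cv (F32_term a1 a2 a3 b1 b2) l -> F32 a1 a2 a3 b1 b2 = l.
Proof.
  intro H. unfold F32.
  assert (He := @epsilon_spec _ (inhabits (Defs.RtoC 0)) (fun l => Cseries_cv (F32_term a1 a2 a3 b1 b2) l) (ex_intro _ l H)).
  destruct He as [H1 H2]. destruct H as [H3 H4].
  apply injective_projections; eapply UL_sequence; eauto.
Qed.

Lemma Cpartial_shift (x y v : nat -> Cplx) (k : C) :
  x 0%nat = y 0%nat -> (forall m, x (S m) = (y (S m) + k * v m)%C) ->
  forall n, Cpartial x (S n) = (Cpartial y (S n) + k * Cpartial v n)%C.
Proof.
  intros H0 HS n. induction n.
  - simpl. rewrite H0, HS. change (Cadd (y 0%nat) (y 1%nat + k * v 0%nat)%C = ((Cadd (y 0%nat) (y 1%nat)) + k * v 0%nat)%C).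
    toC. ceq. ring.
  - change (Cpartial x (S (S n))) with (Cadd (Cpartial x (S n)) (x (S (S n)))).
    change (Cpartial y (S (S n))) with (Cadd (Cpartial y (S n)) (y (S (S n)))).
    change (Cpartial v (S n)) with (Cadd (Cpartial v n) (v (S n))).
    rewrite IHn, HS. toC. ceq. ring.
Qed.

Lemma series_shift (x y v : nat -> Cplx) (k Y V : C) :
  x 0%nat = y 0%nat -> (forall m, x (S m) = (y (S m) + k * v m)%C) ->
  Cseries_cv y Y -> Cseries_cv v V -> Cseries_cv x (Y + k * V)%C.
Proof.
  intros H0 HS [Hy1 Hy2] [Hv1 Hv2].
  assert (Hp := Cpartial_shift x y v k H0 HS).
  rewrite <- is_lim_seq_Reals in *.
  split; rewrite <- is_lim_seq_Reals; apply is_lim_seq_incr_1; apply is_lim_seq_incr_1 in Hy1; apply is_lim_seq_incr_1 in Hy2.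
  - eapply is_lim_seq_ext. { intro n. rewrite Hp. reflexivity. }
    simpl. apply is_lim_seq_plus'; auto.
    apply is_lim_seq_minus'; apply (is_lim_seq_scal_l _ _ (Finite _)); auto.
  - eapply is_lim_seq_ext. { intro n. rewrite Hp. reflexivity. }
    simpl. apply is_lim_seq_plus'; auto.
    apply is_lim_seq_plus'; apply (is_lim_seq_scal_l _ _ (Finite _)); auto.
Qed.

Lemma raabe (v : nat -> R) (M : nat) (d : R) : d > 0 -> (forall n, 0 <= v n) ->
  (forall n, (M <= n)%nat -> INR n * v (S n) <= (INR n - 1 - d) * v n) -> ex_series v.
Proof.
  intros Hd Hv HM.
  set (w := fun k => v (M + k)%nat).
  assert (Hc : forall N, d * sum_f_R0 w N + INR (M + N) * v (S (M + N)) <= (INR M - 1) * v M).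
  { induction N.
    - simpl. unfold w. rewrite Nat.add_0_r. specialize (HM M (le_n _)). lra.
    - simpl sum_f_R0. unfold w at 2.
      specialize (HM (M + S N)%nat ltac:(lia)).
      rewrite <- plus_n_Sm in *. rewrite S_INR in *.
      assert (0 <= v (S (M+N))) by auto. lra. }
  assert (Hb : forall N, sum_f_R0 w N <= (INR M - 1) * v M / d).
  { intro N. specialize (Hc N). assert (0 <= INR (M + N) * v (S (M + N))).
    { apply Rmult_le_pos; [apply pos_INR | auto]. }
    apply (Rmult_le_reg_l d); [lra|]. field_simplify; lra. }
  destruct (growing_cv (sum_f_R0 w)) as [l Hl].
  - intro n. simpl. assert (0 <= w (S n)) by (unfold w; auto). lra.
  - exists ((INR M - 1) * v M / d). intros x [i ->]. apply Hb.
  - apply (ex_series_incr_n v M). exists l. apply is_series_Reals. exact Hl.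
Qed.

Lemma exists_nat_gt (K : R) : exists N : nat, K < INR N.
Proof.
  destruct (archimed K) as [H1 H2].
  destruct (Z_lt_le_dec (up K) 0) as [Hz|Hz].
  - exists 0%nat. simpl. apply IZR_lt in Hz. lra.
  - exists (Z.to_nat (up K)). rewrite INR_IZR_INZ, Z2Nat.id by lia; lra.
Qed.

Definition Hf (p1 p2 p3 r1 r2 r3 q1 q2 s1 s2 d : R) (x : R) : R :=
  (1 - (1 + d) * x)^2 * (1 + x)^2 * ((1 + q1 * x)^2 + (s1 * x)^2) * ((1 + q2 * x)^2 + (s2 * x)^2)
  - ((1 + p1 * x)^2 + (r1 * x)^2) * ((1 + p2 * x)^2 + (r2 * x)^2) * ((1 + p3 * x)^2 + (r3 * x)^2).

Lemma Hf_pos p1 p2 p3 r1 r2 r3 q1 q2 s1 s2 :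
  let s := q1 + q2 - p1 - p2 - p3 in s > 0 ->
  exists e, e > 0 /\ forall x, 0 < x < e -> Hf p1 p2 p3 r1 r2 r3 q1 q2 s1 s2 (s/2) x > 0.
Proof.
  intros s Hs.
  assert (HD : is_derive (Hf p1 p2 p3 r1 r2 r3 q1 q2 s1 s2 (s/2)) 0 s).
  { unfold Hf. auto_derive. trivial. unfold s. field. }
  apply is_derive_Reals in HD.
  destruct (HD (s/2) ltac:(lra)) as [e He].
  exists e. split. { apply cond_pos. }
  intros x [Hx1 Hx2].
  specialize (He x ltac:(lra) ltac:(rewrite Rabs_pos_eq; lra)).
  rewrite Rplus_0_l in He.
  assert (H0 : Hf p1 p2 p3 r1 r2 r3 q1 q2 s1 s2 (s/2) 0 = 0) by (unfold Hf; ring).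
  rewrite H0 in He. apply Rabs_def2 in He. destruct He as [He1 He2].
  assert (Hq : Hf p1 p2 p3 r1 r2 r3 q1 q2 s1 s2 (s/2) x / x > 0) by lra.
  unfold Rdiv in Hq. 
  apply (Rmult_lt_reg_r (/ x)). { apply Rinv_0_lt_compat; lra. } lra.
Qed.

Lemma Hf_scale p1 p2 p3 r1 r2 r3 q1 q2 s1 s2 d n : n <> 0 ->
  n^8 * Hf p1 p2 p3 r1 r2 r3 q1 q2 s1 s2 d (/ n) =
  (n - 1 - d)^2 * (n + 1)^2 * ((q1 + n)^2 + s1^2) * ((q2 + n)^2 + s2^2)
  - n^2 * (((p1 + n)^2 + r1^2) * ((p2 + n)^2 + r2^2) * ((p3 + n)^2 + r3^2)).
Proof. intro. unfold Hf. field. auto. Qed.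

Lemma Cmod_shift2 (z : C) x : Cmod (z + Complex.RtoC x)%C ^ 2 = (fst z + x)^2 + (snd z)^2.
Proof.
  unfold Cmod. rewrite pow2_sqrt. simpl. ring.
  apply Rplus_le_le_0_compat; apply pow2_ge_0.
Qed.

Lemma sq_le x y : 0 <= y -> x^2 <= y^2 -> x <= y.
Proof. intros. destruct (Rle_lt_dec x y); auto. nra. Qed.

Lemma fst_Cpartial (u : nat -> Cplx) n : fst (Cpartial u n) = sum_f_R0 (fun k => fst (u k)) n.
Proof. induction n; simpl; auto. rewrite IHn. reflexivity. Qed.
Lemma snd_Cpartial (u : nat -> Cplx) n : snd (Cpartial u n) = sum_f_R0 (fun k => snd (u k)) n.
Proof. induction n; simpl; auto. rewrite IHn. reflexivity. Qed.

Lemma term_ratio (a1 a2 a3 b1 b2 : C) n : notNonPosInt b1 -> notNonPosInt b2 ->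
  F32_term a1 a2 a3 b1 b2 (S n) = (F32_term a1 a2 a3 b1 b2 n *
    ((a1 + Complex.RtoC (INR n)) * (a2 + Complex.RtoC (INR n)) * (a3 + Complex.RtoC (INR n)) /
     ((Complex.RtoC (INR n) + Complex.RtoC 1) * (b1 + Complex.RtoC (INR n)) * (b2 + Complex.RtoC (INR n)))))%C.
Proof.
  intros H1 H2. rewrite !term_eq. rewrite !poch_S. rewrite fact_S. toC. ceq. field.
  repeat split; auto using fact_nz, Sm_nz, poch_nz, nnpi_add.
Qed.

Lemma conv (a1 a2 a3 b1 b2 : C) : notNonPosInt b1 -> notNonPosInt b2 ->
  fst b1 + fst b2 - fst a1 - fst a2 - fst a3 > 0 ->
  exists l, Cseries_cv (F32_term a1 a2 a3 b1 b2) l.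
Proof.
  intros Hb1 Hb2 Hs.
  set (t := F32_term a1 a2 a3 b1 b2).
  set (s := fst b1 + fst b2 - fst a1 - fst a2 - fst a3) in Hs.
  destruct (Hf_pos (fst a1) (fst a2) (fst a3) (snd a1) (snd a2) (snd a3) (fst b1) (fst b2) (snd b1) (snd b2) Hs)
    as [e [He Hh]].
  fold s in Hh.
  destruct (exists_nat_gt (Rmax (/e) (1 + s/2))) as [M HM].
  assert (Hrat : forall n, (M <= n)%nat -> INR n * Cmod (t (S n)) <= (INR n - 1 - s/2) * Cmod (t n)).
  { intros n Hn.
    assert (HnM : INR M <= INR n) by (apply le_INR; auto).
    assert (Hm1 := Rmax_l (/e) (1 + s/2)). assert (Hm2 := Rmax_r (/e) (1 + s/2)).
    assert (Hn0 : 0 < INR n) by (assert (0 < / e) by (apply Rinv_0_lt_compat; auto); lra).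
    assert (Hx : 0 < / INR n < e).
    { split. apply Rinv_0_lt_compat; auto.
      rewrite <- (Rinv_inv e). apply Rinv_lt_contravar. apply Rmult_lt_0_compat; auto. apply Rinv_0_lt_compat; auto.
      lra. }
    specialize (Hh _ Hx).
    assert (Hsc := Hf_scale (fst a1) (fst a2) (fst a3) (snd a1) (snd a2) (snd a3) (fst b1) (fst b2) (snd b1) (snd b2) (s/2) (INR n) ltac:(lra)).
    assert (Hpos : 0 < INR n ^ 8) by (apply pow_lt; auto).
    assert (Hineq : 0 < (INR n - 1 - s / 2) ^ 2 * (INR n + 1) ^ 2 * ((fst b1 + INR n) ^ 2 + snd b1 ^ 2) *
       ((fst b2 + INR n) ^ 2 + snd b2 ^ 2) -
       INR n ^ 2 * (((fst a1 + INR n) ^ 2 + snd a1 ^ 2) * ((fst a2 + INR n) ^ 2 + snd a2 ^ 2) *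
        ((fst a3 + INR n) ^ 2 + snd a3 ^ 2))).
    { rewrite <- Hsc. apply Rmult_lt_0_compat; auto. }
    clear Hsc Hh.
    unfold t. rewrite term_ratio; auto. fold t.
    assert (Hden : ((Complex.RtoC (INR n) + Complex.RtoC 1) * (b1 + Complex.RtoC (INR n)) * (b2 + Complex.RtoC (INR n)))%C <> Complex.RtoC 0).
    { apply Cmul_nz; [apply Cmul_nz|]; auto using Sm_nz, nnpi_add. }
    rewrite Cmod_mult, Cmod_div; auto.
    rewrite !Cmod_mult.
    assert (En1 : Cmod (Complex.RtoC (INR n) + Complex.RtoC 1)%C = INR n + 1).
    { rewrite <- RtoC_plusE, Cmod_R, Rabs_pos_eq; lra. }
    rewrite En1.
    set (X1 := Cmod (a1 + Complex.RtoC (INR n))%C).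
    set (X2 := Cmod (a2 + Complex.RtoC (INR n))%C).
    set (X3 := Cmod (a3 + Complex.RtoC (INR n))%C).
    set (Y1 := Cmod (b1 + Complex.RtoC (INR n))%C).
    set (Y2 := Cmod (b2 + Complex.RtoC (INR n))%C).
    assert (E1 : X1^2 = (fst a1 + INR n)^2 + snd a1^2) by apply Cmod_shift2.
    assert (E2 : X2^2 = (fst a2 + INR n)^2 + snd a2^2) by apply Cmod_shift2.
    assert (E3 : X3^2 = (fst a3 + INR n)^2 + snd a3^2) by apply Cmod_shift2.
    assert (F1 : Y1^2 = (fst b1 + INR n)^2 + snd b1^2) by apply Cmod_shift2.
    assert (F2 : Y2^2 = (fst b2 + INR n)^2 + snd b2^2) by apply Cmod_shift2.
    assert (HY1 : 0 < Y1) by (apply Cmod_gt_0; apply nnpi_add; auto).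
    assert (HY2 : 0 < Y2) by (apply Cmod_gt_0; apply nnpi_add; auto).
    assert (HT : 0 <= Cmod (t n)) by apply Cmod_ge_0.
    assert (Hmain : INR n * (X1 * X2 * X3) <= (INR n - 1 - s/2) * ((INR n + 1) * Y1 * Y2)).
    { apply sq_le.
      - apply Rmult_le_pos; [lra|]. apply Rmult_le_pos; [|lra]. apply Rmult_le_pos; lra.
      - replace ((INR n * (X1 * X2 * X3))^2) with (INR n ^2 * (X1^2 * X2^2 * X3^2)) by ring.
        replace (((INR n - 1 - s/2) * ((INR n + 1) * Y1 * Y2))^2) with
          ((INR n - 1 - s/2)^2 * (INR n + 1)^2 * Y1^2 * Y2^2) by ring.
        rewrite E1, E2, E3, F1, F2. lra. }
    assert (Hd : 0 < (INR n + 1) * Y1 * Y2) by (apply Rmult_lt_0_compat; [apply Rmult_lt_0_compat|]; lra).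
    assert (Hq : INR n * (X1 * X2 * X3 / ((INR n + 1) * Y1 * Y2)) <= INR n - 1 - s/2).
    { apply (Rmult_le_reg_r ((INR n + 1) * Y1 * Y2)); auto.
      replace (INR n * (X1 * X2 * X3 / ((INR n + 1) * Y1 * Y2)) * ((INR n + 1) * Y1 * Y2))
        with (INR n * (X1 * X2 * X3)) by (field; lra). lra. }
    replace (INR n * (Cmod (t n) * (X1 * X2 * X3 / ((INR n + 1) * Y1 * Y2))))
      with (Cmod (t n) * (INR n * (X1 * X2 * X3 / ((INR n + 1) * Y1 * Y2)))) by ring.
    rewrite (Rmult_comm (INR n - 1 - s/2)). apply Rmult_le_compat_l; auto. }
  assert (Hex : ex_series (fun n => Cmod (t n))).
  { apply (raabe _ M (s/2)); auto. lra. intro; apply Cmod_ge_0. }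
  assert (Hf : ex_series (fun n => fst (t n))).
  { apply ex_series_Rabs. apply (@ex_series_le R_AbsRing R_CompleteNormedModule (fun n => Rabs (fst (t n))) (fun n => Cmod (t n))); [|exact Hex]. intro n. change (norm (Rabs (fst (t n)))) with (Rabs (Rabs (fst (t n)))).
    rewrite Rabs_Rabsolu. apply re_le_Cmod. }
  assert (Hg : ex_series (fun n => snd (t n))).
  { apply ex_series_Rabs. apply (@ex_series_le R_AbsRing R_CompleteNormedModule (fun n => Rabs (snd (t n))) (fun n => Cmod (t n))); [|exact Hex]. intro n. change (norm (Rabs (snd (t n)))) with (Rabs (Rabs (snd (t n)))).
    rewrite Rabs_Rabsolu. eapply Rle_trans; [apply Rmax_r | apply Rmax_Cmod]. }
  exists (Series (fun n => fst (t n)), Series (fun n => snd (t n))).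
  apply Series_correct, is_series_Reals in Hf. apply Series_correct, is_series_Reals in Hg.
  split; rewrite <- is_lim_seq_Reals.
  - apply (is_lim_seq_ext (sum_f_R0 (fun k => fst (t k)))). { intro n. symmetry. apply fst_Cpartial. } apply is_lim_seq_Reals. exact Hf.
  - apply (is_lim_seq_ext (sum_f_R0 (fun k => snd (t k)))). { intro n. symmetry. apply snd_Cpartial. } apply is_lim_seq_Reals. exact Hg.
Qed.

Lemma term0 (a1 a2 a3 b1 b2 : C) : F32_term a1 a2 a3 b1 b2 0 = Complex.RtoC 1.
Proof. rewrite term_eq. simpl poch. toC. simpl (INR (Factorial.fact 0)). ceq. field.
  all: try (split; intro E; apply (f_equal fst) in E; simpl in E; lra). Qed.

Lemma fst_div2 (z : C) : fst (z / Complex.RtoC 2)%C = fst z / 2.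
Proof. simpl. field. Qed.

Lemma fst_plus (x y : C) : fst (x + y)%C = fst x + fst y. Proof. reflexivity. Qed.
Lemma fst_RtoC x : fst (Complex.RtoC x) = x. Proof. reflexivity. Qed.
Lemma fst_mult2 (z : C) : fst (Complex.RtoC 2 * z)%C = 2 * fst z. Proof. simpl. ring. Qed.

Lemma F32_congr x1 x2 x3 x4 x5 y1 y2 y3 y4 y5 :
  x1 = y1 -> x2 = y2 -> x3 = y3 -> x4 = y4 -> x5 = y5 -> F32 x1 x2 x3 x4 x5 = F32 y1 y2 y3 y4 y5.
Proof. intros; subst; reflexivity. Qed.

Theorem mainTheorem12 (k : nat) (a b c : Cplx) :
  (1 <= k)%nat ->
  notNonPosInt (Cmul (RtoC 2) c) ->
  notNonPosInt (Cadd (Cmul (RtoC 2) c) (RtoC 2)) ->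
  notNonPosInt (Cdiv (Cadd (Cadd a b) (RtoC 1)) (RtoC 2)) ->
  notNonPosInt (Cdiv (Cadd (Cadd a b) (RtoC 3)) (RtoC 2)) ->
  notNonPosInt (Cdiv (Cadd (Cadd a b) (RtoC 5)) (RtoC 2)) ->
  Cadd (Cmul (RtoC 2) c) (RtoC 1) <> RtoC 0 ->
  Cre (Csub (Cmul (RtoC 2) c) (Cadd (Cadd a b) (RtoC (2 * INR k - 1)))) > 0 ->
  G k a b c =
  Cadd (G (k - 1) a b c)
    (Cmul (Cdiv b (Cadd (Cadd a b) (RtoC 1)))
       (Cadd
          (Cmul
             (Cdiv (Cmul (Cadd a (RtoC (INR k))) (Cadd b (RtoC 1)))
                   (Cmul (Cadd (Cmul (RtoC 2) c) (RtoC 1))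
                         (Cadd (Cadd a b) (RtoC 3))))
             (G (k - 1) (Cadd a (RtoC 2)) (Cadd b (RtoC 2)) (Cadd c (RtoC 1))))
          (G (k - 1) (Cadd a (RtoC 1)) (Cadd b (RtoC 1)) c))).
Proof.
  intros Hk H2c H2c2 Hb1 Hb3 Hb5 H2c1 Hre.
  destruct k as [|n]; [lia|]. replace (S n - 1)%nat with n by lia. clear Hk.
  unfold G. rewrite !Cdiv_eq in *. toC. rewrite ?Cadd_fun, ?Cmul_fun, ?RtoC_fun in *.
  unfold Cre in Hre. rewrite Csub_fun in Hre.
  set (a' := a : C). set (b' := b : C). set (c' := c : C).
  set (beta := ((a' + b' + Complex.RtoC 1) / Complex.RtoC 2)%C).
  set (A := (a' + Complex.RtoC (INR n) + Complex.RtoC 1)%C).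
  assert (EA : (a' + Complex.RtoC (INR (S n)))%C = A).
  { unfold A. rewrite S_INR, RtoC_plusE. ceq. ring. }
  rewrite EA.
  rewrite (F32_congr (a' + Complex.RtoC 2 + Complex.RtoC (INR n))%C (b' + Complex.RtoC 2)%C _ _ _
     (A + Complex.RtoC 1)%C (b' + Complex.RtoC 1 + Complex.RtoC 1)%C (c' + Complex.RtoC 1)%C
     (beta + Complex.RtoC 1 + Complex.RtoC 1)%C (Complex.RtoC 2 * (c' + Complex.RtoC 1))%C);
   [| unfold A; ceq; ring | ceq; ring | reflexivity | unfold beta; ceq; field | reflexivity].
  rewrite (F32_congr (a' + Complex.RtoC 1 + Complex.RtoC (INR n))%C (b' + Complex.RtoC 1)%C _ _ _
     A (b' + Complex.RtoC 1)%C c' (beta + Complex.RtoC 1)%C (Complex.RtoC 2 * c')%C);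
   [| unfold A; ceq; ring | reflexivity | reflexivity | unfold beta; ceq; field | reflexivity].
  assert (Hbeta : notNonPosInt beta) by exact Hb1.
  assert (Hbeta1 : notNonPosInt (beta + Complex.RtoC 1)%C).
  { replace (beta + Complex.RtoC 1)%C with ((a' + b' + Complex.RtoC 3) / Complex.RtoC 2)%C by (unfold beta; ceq; field). exact Hb3. }
  assert (Hbeta2 : notNonPosInt (beta + Complex.RtoC 1 + Complex.RtoC 1)%C).
  { replace (beta + Complex.RtoC 1 + Complex.RtoC 1)%C with ((a' + b' + Complex.RtoC 5) / Complex.RtoC 2)%C by (unfold beta; ceq; field). exact Hb5. }
  assert (Hc2 : notNonPosInt (Complex.RtoC 2 * c')%C) by exact H2c.
  assert (Hc21 : notNonPosInt (Complex.RtoC 2 * c' + Complex.RtoC 1)%C) by (apply nnpi_S; auto).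
  assert (Hc22 : notNonPosInt (Complex.RtoC 2 * (c' + Complex.RtoC 1))%C).
  { replace (Complex.RtoC 2 * (c' + Complex.RtoC 1))%C with (Complex.RtoC 2 * c' + Complex.RtoC 2)%C by (ceq; ring). exact H2c2. }
  assert (Hre' : 2 * fst c' - fst a' - fst b' - 2 * INR n - 1 > 0).
  { rewrite S_INR in Hre. simpl in Hre. unfold a', b', c'. lra. }
  assert (Fbeta : fst beta = (fst a' + fst b' + 1) / 2) by (unfold beta; rewrite fst_div2; simpl; ring).
  destruct (conv (a' + Complex.RtoC (INR n)) b' c' beta (Complex.RtoC 2 * c')) as [l0 Hl0]; auto.
  { rewrite ?fst_plus, ?fst_RtoC, ?fst_mult2, Fbeta. lra. }
  destruct (conv A (b' + Complex.RtoC 1) c' (beta + Complex.RtoC 1) (Complex.RtoC 2 * c')) as [lu Hlu]; auto.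
  { unfold A. rewrite ?fst_plus, ?fst_RtoC, ?fst_mult2, ?fst_plus, ?fst_RtoC, Fbeta. lra. }
  destruct (conv (A + Complex.RtoC 1) (b' + Complex.RtoC 1 + Complex.RtoC 1) (c' + Complex.RtoC 1)
     (beta + Complex.RtoC 1 + Complex.RtoC 1) (Complex.RtoC 2 * (c' + Complex.RtoC 1))) as [lw Hlw]; auto.
  { unfold A. rewrite ?fst_plus, ?fst_RtoC, ?fst_mult2, ?fst_plus, ?fst_RtoC, Fbeta. lra. }
  set (kap := ((A * (b' + Complex.RtoC 1)) / (Complex.RtoC 2 * (beta + Complex.RtoC 1) * (Complex.RtoC 2 * c' + Complex.RtoC 1)))%C).
  assert (Hlh : Cseries_cv (F32_term A (b' + Complex.RtoC 1) (c' + Complex.RtoC 1) (beta + Complex.RtoC 1) (Complex.RtoC 2 * c' + Complex.RtoC 1))%C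
                 (lu + kap * lw)%C).
  { apply (series_shift _ (F32_term A (b' + Complex.RtoC 1) c' (beta + Complex.RtoC 1) (Complex.RtoC 2 * c'))%C
            (F32_term (A + Complex.RtoC 1) (b' + Complex.RtoC 1 + Complex.RtoC 1) (c' + Complex.RtoC 1)
               (beta + Complex.RtoC 1 + Complex.RtoC 1) (Complex.RtoC 2 * (c' + Complex.RtoC 1)))%C); auto.
    intro m. unfold kap. rewrite <- (R2 A (b' + Complex.RtoC 1) c' (beta + Complex.RtoC 1) m); auto using nnpi_nz, poch_nz.
      ceq. ring. }
  set (lam := (b' * c' / (beta * (Complex.RtoC 2 * c')))%C).
  assert (Hl1 : Cseries_cv (F32_term A b' c' beta (Complex.RtoC 2 * c'))%C (l0 + lam * (lu + kap * lw))%C).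
  { apply (series_shift _ (F32_term (a' + Complex.RtoC (INR n)) b' c' beta (Complex.RtoC 2 * c'))%C
            (F32_term A (b' + Complex.RtoC 1) (c' + Complex.RtoC 1) (beta + Complex.RtoC 1) (Complex.RtoC 2 * c' + Complex.RtoC 1))%C); auto.
    intro m. unfold lam, A. rewrite <- (R1 (a' + Complex.RtoC (INR n)) b' c' beta (Complex.RtoC 2 * c') m); auto using nnpi_nz, poch_nz.
      ceq. ring. }
  rewrite (F32_val _ _ _ _ _ _ Hl1), (F32_val _ _ _ _ _ _ Hl0), (F32_val _ _ _ _ _ _ Hlu), (F32_val _ _ _ _ _ _ Hlw).
  assert (Hbz : beta <> Complex.RtoC 0) by (apply nnpi_nz; auto).
  assert (Hb1z : (beta + Complex.RtoC 1)%C <> Complex.RtoC 0) by (apply nnpi_nz; auto).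
  assert (Hcz : c' <> Complex.RtoC 0).
  { intro E. apply (nnpi_nz _ Hc2). rewrite E. ceq. ring. }
  assert (Hab1 : (a' + b' + Complex.RtoC 1)%C <> Complex.RtoC 0).
  { intro E. apply Hbz. unfold beta. rewrite E. ceq. field. }
  assert (Hab3 : (a' + b' + Complex.RtoC 3)%C <> Complex.RtoC 0).
  { intro E. apply Hb1z. unfold beta. replace ((a' + b' + Complex.RtoC 1) / Complex.RtoC 2 + Complex.RtoC 1)%C
      with ((a' + b' + Complex.RtoC 3) / Complex.RtoC 2)%C by (ceq; field). rewrite E. ceq. field. }
  unfold lam, kap, beta. ceq. field.
  cbv beta. repeat split; auto.
Qed.
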